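(* Let $S:\mathbb{R}^d\times\mathbb{R}^k\to\mathbb{R}$ be a locally Lipschitz generating family for $L\subset T^*\mathbb{R}^d$, and let $\Phi(x,\eta')=(x,\phi(x,\eta'))$ be a $C^1$ fiberwise diffeomorphism of $\mathbb{R}^d\times\mathbb{R}^k$ (i.e. a $C^1$ diffeomorphism such that each $\eta'\mapsto\phi(x,\eta')$ is a diffeomorphism of $\mathbb{R}^k$). Then $S':=S\circ\Phi$ is also a generating family for $L$.
   Context: A locally Lipschitz family $S:\mathbb{R}^d\times\mathbb{R}^k\to\mathbb{R}$ is called a generating family for $L\subset T^*\mathbb{R}^d$ when $L=\{(x,y)\in T^*\mathbb{R}^d:\exists\eta\in\mathbb{R}^k,\ (y,0)\in\partial S(x,\eta)\}$, where $\partial S$ is Clarke's generalized derivative of $S$ as a function on $\mathbb{R}^d\times\mathbb{R}^k$: for a locally Lipschitz $f$ on $\mathbb{R}^m$, $\partial f(a)$ is the convex hull of the set of limits of $df(x_n)$ over sequences $x_n\to a$ of points where $f$ is differentiable. *)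

(* Defs.v *)
From HB Require Import structures.
From mathcomp Require Import all_boot all_order all_algebra.
From mathcomp Require Import all_classical all_reals all_analysis.
Set Implicit Arguments. Unset Strict Implicit. Unset Printing Implicit Defensive.
Import Order.TTheory GRing.Theory Num.Theory.
Import numFieldNormedType.Exports.
Local Open Scope classical_set_scope.
Local Open Scope ring_scope.

Section Defs.
Variable R : realType.

Definition dotv (n : nat) (u v : 'rV[R]_n) : R := \sum_(i < n) u 0 i * v 0 i.

(* R^d x R^k is modelled as 'rV_d * 'rV_k; a covector on it is a pair (p,q),
   acting by (u,v) |-> p.u + q.v *)
Definition covec (d k : nat) (c : 'rV[R]_d * 'rV[R]_k) (h : 'rV[R]_d * 'rV[R]_k) : R :=
  dotv c.1 h.1 + dotv c.2 h.2.

Definition locally_lipschitz (V : normedModType R) (f : V -> R) : Prop :=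
  forall a : V, exists r : R, 0 < r /\ exists K : R,
    forall x y, ball a r x -> ball a r y -> `|f x - f y| <= K * `|x - y|.

Definition conv_hull (V : lmodType R) (A : set V) : set V :=
  [set z | exists n (w : 'I_n -> R) (p : 'I_n -> V),
     [/\ forall i, 0 <= w i, \sum_(i < n) w i = 1, forall i, A (p i)
       & z = \sum_(i < n) w i *: p i]].

Definition reachable_grad (d k : nat) (S : 'rV[R]_d * 'rV[R]_k -> R)
  (a : 'rV[R]_d * 'rV[R]_k) : set ('rV[R]_d * 'rV[R]_k) :=
  [set c | exists (an : nat -> 'rV[R]_d * 'rV[R]_k)
                  (cn : nat -> 'rV[R]_d * 'rV[R]_k),
     [/\ an n @[n --> \oo] --> a,
         forall n, differentiable S (an n),
         forall n h, 'd S (an n) h = covec (cn n) h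
       & cn n @[n --> \oo] --> c]].

Definition clarke (d k : nat) (S : 'rV[R]_d * 'rV[R]_k -> R)
  (a : 'rV[R]_d * 'rV[R]_k) : set ('rV[R]_d * 'rV[R]_k) :=
  conv_hull (reachable_grad S a).

Definition generating_family (d k : nat) (S : 'rV[R]_d * 'rV[R]_k -> R)
  (L : set ('rV[R]_d * 'rV[R]_d)) : Prop :=
  locally_lipschitz S /\
  L = [set xy | exists eta : 'rV[R]_k, clarke S (xy.1, eta) (xy.2, 0)].

(* C^1 map between normed spaces: differentiable everywhere, with
   derivative continuous (tested on each direction; finite dimensions) *)
Definition C1 (V W : normedModType R) (f : V -> W) : Prop :=
  (forall x, differentiable f x) /\ (forall h : V, continuous (fun x => 'd f x h)).

Definition C1_diffeo (V : normedModType R) (f : V -> V) : Prop :=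
  exists g : V -> V, [/\ cancel f g, cancel g f, C1 f & C1 g].

End Defs.

(* Main.v *)
Require Import Defs.
From HB Require Import structures.
From mathcomp Require Import all_boot all_order all_algebra.
From mathcomp Require Import all_classical all_reals all_analysis.
Import Order.TTheory GRing.Theory Num.Theory.
Import numFieldNormedType.Exports.
Local Open Scope classical_set_scope.
Local Open Scope ring_scope.

Lemma cvx_id (K : pzRingType) (W : lmodType K) (a x y : W) (t : K) :
  a - (y + t *: (x - y)) = (1 - t) *: (a - y) + t *: (a - x).
Proof.
have -> : (1 - t) *: (a - y) + t *: (a - x) = (a - y) + t *: (y - x).
  rewrite scalerBl scale1r -addrA; congr (_ + _).
  by rewrite -scalerN -scalerDr opprB addrA subrK.
by rewrite opprD addrA -scalerN opprB.
Qed.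

Lemma ball_convex (R : realType) (W : normedModType R) (a x y : W) r t :
  ball a r x -> ball a r y -> 0 <= t <= 1 -> ball a r (y + t *: (x - y)).
Proof.
rewrite -!ball_normE /= => hx hy /andP[t0 t1].
rewrite cvx_id.
apply: (le_lt_trans (ler_normD _ _)).
rewrite !normrZ !ger0_norm ?subr_ge0 //.
have hm : Num.max `|a - x| `|a - y| < r by rewrite gt_max hx hy.
apply: le_lt_trans hm.
apply: (@le_trans _ _ ((1 - t) * Num.max `|a - x| `|a - y| + t * Num.max `|a - x| `|a - y|)).
  by apply: lerD; apply: ler_wpM2l; rewrite ?subr_ge0 // le_max lexx ?orbT.
by rewrite -mulrDl subrK mul1r.
Qed.

Section Basis.
Variables (R : realType) (d k : nat).
Local Notation V := ('rV[R]_d * 'rV[R]_k)%type.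

Lemma dotv_delta n (u : 'rV[R]_n) i : dotv u (delta_mx 0 i) = u 0 i.
Proof.
rewrite /dotv (bigD1 i) //= big1 ?addr0; first by rewrite mxE !eqxx mulr1.
by move=> j ji; rewrite mxE (negbTE ji) andbF mulr0.
Qed.

Lemma dotvC n (u v : 'rV[R]_n) : dotv u v = dotv v u.
Proof. by apply: eq_bigr => i _; rewrite mulrC. Qed.

Lemma dotvDl n (u v w : 'rV[R]_n) : dotv (u + v) w = dotv u w + dotv v w.
Proof. by rewrite /dotv -big_split; apply: eq_bigr => i _; rewrite mxE mulrDl. Qed.

Lemma dotvZl n a (u w : 'rV[R]_n) : dotv (a *: u) w = a * dotv u w.
Proof. by rewrite /dotv mulr_sumr; apply: eq_bigr => i _; rewrite mxE mulrA. Qed.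

Lemma dotv0l n (w : 'rV[R]_n) : dotv 0 w = 0.
Proof. by rewrite /dotv big1 // => i _; rewrite mxE mul0r. Qed.

Lemma covecDl (u v h : V) : covec (u + v) h = covec u h + covec v h.
Proof. by rewrite /covec /= !dotvDl addrACA. Qed.
Lemma covecZl a (u h : V) : covec (a *: u) h = a * covec u h.
Proof. by rewrite /covec /= !dotvZl mulrDr. Qed.
Lemma covec0l (h : V) : covec 0 h = 0.
Proof. by rewrite /covec /= !dotv0l addr0. Qed.
Lemma covecC (u h : V) : covec u h = covec h u.
Proof. by rewrite /covec dotvC [dotv u.2 _]dotvC. Qed.
Lemma covecDr (u v h : V) : covec h (u + v) = covec h u + covec h v.
Proof. by rewrite !(covecC h) covecDl. Qed.
Lemma covecZr a (u h : V) : covec h (a *: u) = a * covec h u.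
Proof. by rewrite !(covecC h) covecZl. Qed.
Lemma covec0r (h : V) : covec h 0 = 0.
Proof. by rewrite covecC covec0l. Qed.

Definition E1 (i : 'I_d) : V := (delta_mx 0 i, 0).
Definition E2 (j : 'I_k) : V := (0, delta_mx 0 j).

Lemma covecE1 (z : V) i : covec z (E1 i) = z.1 0 i.
Proof. by rewrite /covec /= dotv_delta dotvC dotv0l addr0. Qed.
Lemma covecE2 (z : V) j : covec z (E2 j) = z.2 0 j.
Proof. by rewrite /covec /= dotv_delta dotvC dotv0l add0r. Qed.

Lemma fst_sum I (r : seq I) (P : pred I) (F : I -> V) :
  (\sum_(i <- r | P i) F i).1 = \sum_(i <- r | P i) (F i).1.
Proof. exact: (big_morph fst). Qed.
Lemma snd_sum I (r : seq I) (P : pred I) (F : I -> V) :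
  (\sum_(i <- r | P i) F i).2 = \sum_(i <- r | P i) (F i).2.
Proof. exact: (big_morph snd). Qed.

Lemma decomp (h : V) :
  h = \sum_i h.1 0 i *: E1 i + \sum_j h.2 0 j *: E2 j.
Proof.
case: h => u v; congr pair.
  rewrite /= !fst_sum /E1 /E2 /= [X in _ + X]big1 ?addr0; last by move=> j _; rewrite scaler0.
  exact: row_sum_delta.
rewrite /= !snd_sum /E1 /E2 /= [X in X + _]big1 ?add0r; last by move=> j _; rewrite scaler0.
exact: row_sum_delta.
Qed.

Lemma morph_sum (l : V -> R) {I} {r : seq I} {P : pred I} {F : I -> V} :
  (forall u v, l (u + v) = l u + l v) -> l 0 = 0 ->
  l (\sum_(i <- r | P i) F i) = \sum_(i <- r | P i) l (F i).
Proof. by move=> lD l0; apply: (big_morph l). Qed.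

Definition Rep (l : V -> R) : V :=
  \sum_i l (E1 i) *: E1 i + \sum_j l (E2 j) *: E2 j.

Lemma RepP (l : V -> R) :
  (forall u v, l (u + v) = l u + l v) -> (forall a u, l (a *: u) = a * l u) ->
  forall h, covec (Rep l) h = l h.
Proof.
move=> lD lZ h.
have l0 : l 0 = 0 by rewrite -(scale0r 0) lZ mul0r.
rewrite [in RHS](decomp h) lD !(morph_sum _ lD l0) /Rep covecDl.
have cD := covecDl; have c0 := covec0l.
rewrite !(morph_sum (fun z => covec z h) (fun u v => cD u v h) (c0 h)).
congr (_ + _); apply: eq_bigr => i _;
  by rewrite covecZl lZ (covecC _ h) ?covecE1 ?covecE2 mulrC.
Qed.

Lemma covec_inj (z z' : V) : (forall h, covec z h = covec z' h) -> z = z'.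
Proof.
move=> H; rewrite (decomp z) (decomp z'); congr (_ + _); apply: eq_bigr => i _;
  by rewrite -?covecE1 -?covecE2 H.
Qed.


Lemma fst_lin : linear (fst : V -> 'rV[R]_d). Proof. by []. Qed.
HB.instance Definition _ := GRing.isLinear.Build _ _ _ _ (fst : V -> 'rV[R]_d) fst_lin.
Definition fstL : {linear V -> 'rV[R]_d} := (fst : V -> 'rV[R]_d).

Lemma fst_cont : continuous (fst : V -> 'rV[R]_d).
Proof. by move=> [x y]; exact: cvg_fst. Qed.
Lemma snd_cont : continuous (snd : V -> 'rV[R]_k).
Proof. by move=> [x y]; exact: cvg_snd. Qed.

Lemma dchain (f g : V -> V) x h : cancel f g ->
  differentiable f x -> differentiable g (f x) -> 'd g (f x) ('d f x h) = h.
Proof.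
move=> fK df dg.
have := diff_comp df dg => /(congr1 (fun F => F h)) /= <-.
have -> : g \o f = idfun by apply/funext => y /=; rewrite fK.
rewrite (@diff_lin R _ _ idfun) // => y; exact: cvg_id.
Qed.

Lemma dfst (F : V -> V) x h : (forall p, (F p).1 = p.1) ->
  differentiable F x -> ('d F x h).1 = h.1.
Proof.
move=> F1 dF.
have dfs y : differentiable (fstL : V -> 'rV[R]_d) y.
  exact: (@linear_differentiable R V 'rV[R]_d fstL y fst_cont).
have dl y : 'd (fstL : V -> 'rV[R]_d) y = fstL :> (V -> 'rV[R]_d).
  exact: (@diff_lin R V 'rV[R]_d fstL y fst_cont).
have H := @diff_comp R V V 'rV[R]_d F fstL x dF (dfs (F x)).
have E : (fstL \o F) = (fstL : V -> 'rV[R]_d) by apply/funext => y /=; rewrite F1.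
have H1 := congr1 (fun G => G h) H.
have H2 : 'd (fstL \o F) x h = 'd fstL x h := congr1 (fun G => 'd G x h) E.
have H3 := congr1 (fun G => G h) (dl x).
have H4 := congr1 (fun G => G ('d F x h)) (dl (F x)).
simpl in H1, H3, H4.
by rewrite -H4 -H1 H2 H3.
Qed.

Lemma covec_cvg (u w : nat -> V) (u0 w0 : V) :
  u n @[n --> \oo] --> u0 -> w n @[n --> \oo] --> w0 ->
  covec (u n) (w n) @[n --> \oo] --> covec u0 w0.
Proof.
move=> hu hw.
have e1 (s : nat -> V) (s0 : V) i : s n @[n --> \oo] --> s0 ->
    (s n).1 0 i @[n --> \oo] --> s0.1 0 i.
  move=> hs.
  have h1 : (s n).1 @[n --> \oo] --> s0.1 := cvg_comp _ _ hs (fst_cont s0).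
  exact: (cvg_comp _ _ h1 (@coord_continuous R 1 d 0 i s0.1)).
have e2 (s : nat -> V) (s0 : V) i : s n @[n --> \oo] --> s0 ->
    (s n).2 0 i @[n --> \oo] --> s0.2 0 i.
  move=> hs.
  have h1 : (s n).2 @[n --> \oo] --> s0.2 := cvg_comp _ _ hs (snd_cont s0).
  exact: (cvg_comp _ _ h1 (@coord_continuous R 1 k 0 i s0.2)).
rewrite /covec /dotv; apply: cvgD.
  apply: cvg_big => //; first exact: add_continuous.
  by move=> i _; apply: cvgM; [exact: e1|exact: e1].
apply: cvg_big => //; first exact: add_continuous.
by move=> i _; apply: cvgM; [exact: e2|exact: e2].
Qed.

Lemma Rep_cvg (l : nat -> V -> R) (l0 : V -> R) :
  (forall i, l n (E1 i) @[n --> \oo] --> l0 (E1 i)) ->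
  (forall j, l n (E2 j) @[n --> \oo] --> l0 (E2 j)) ->
  Rep (l n) @[n --> \oo] --> Rep l0.
Proof.
move=> h1 h2; rewrite /Rep; apply: cvgD.
  apply: cvg_big => //; first exact: add_continuous.
  by move=> i _; apply: cvgZ => //; exact: cvg_cst.
apply: cvg_big => //; first exact: add_continuous.
by move=> i _; apply: cvgZ => //; exact: cvg_cst.
Qed.


Lemma lin_covec (c b : V) (G : V -> V) :
  (forall u v, covec c ('d G b (u + v)) = covec c ('d G b u) + covec c ('d G b v)) /\
  (forall a u, covec c ('d G b (a *: u)) = a * covec c ('d G b u)).
Proof. by split=> *; rewrite ?linearD ?linearZ /= ?covecDr ?covecZr. Qed.

Lemma main_lemma (T G : V -> V) (F F' : V -> R) (a c : V) :
  cancel T G -> cancel G T -> C1 T -> C1 G -> (forall x, F' x = F (T x)) ->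
  reachable_grad F' a c ->
  exists2 e, reachable_grad F (T a) e &
    forall h, covec c h = covec e ('d T a h).
Proof.
move=> TK GK [dT cT] [dG cG] FF' [an [cn [ha hd hD hc]]].
pose bn n := T (an n).
have hb : bn n @[n --> \oo] --> T a.
  exact: (cvg_comp _ _ ha (differentiable_continuous (dT a))).
have FE : F = F' \o G by apply/funext => y /=; rewrite FF' GK.
have Gb n : G (bn n) = an n by rewrite /bn TK.
have dFb n : differentiable F (bn n).
  rewrite FE; apply: differentiable_comp; first exact: dG.
  by rewrite Gb; exact: hd.
have dFbE n h : 'd F (bn n) h = covec (cn n) ('d G (bn n) h).
  have dF' : differentiable F' (G (bn n)) by rewrite Gb; exact: hd.
  have H := congr1 (fun f => f h) (diff_comp (dG (bn n)) dF').
  simpl in H; rewrite FE H Gb; exact: hD.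
pose ln n := fun h => covec (cn n) ('d G (bn n) h).
pose l0 := fun h => covec c ('d G (T a) h).
exists (Rep l0).
  exists bn, (fun n => Rep (ln n)); split => //.
    move=> n h; rewrite dFbE RepP //.
      by case: (lin_covec (cn n) (bn n) G).
    by case: (lin_covec (cn n) (bn n) G).
  apply: Rep_cvg => i; apply: covec_cvg => //;
    exact: (cvg_comp _ _ hb (cG _ (T a))).
move=> h; rewrite RepP.
- by rewrite /l0 dchain.
- by case: (lin_covec c (T a) G).
- by case: (lin_covec c (T a) G).
Qed.


Lemma conv_transfer (T G : V -> V) (F F' : V -> R) (a z0 : V) :
  cancel T G -> cancel G T -> C1 T -> C1 G -> (forall x, F' x = F (T x)) ->
  clarke F' a z0 ->
  exists2 z, clarke F (T a) z & forall h, covec z0 h = covec z ('d T a h).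
Proof.
move=> TK GK CT CG FF' [n [w [p [w0 w1 pin ->]]]].
have /choice [e He] : forall i : 'I_n, exists e : V,
    reachable_grad F (T a) e /\ forall h, covec (p i) h = covec e ('d T a h).
  by move=> i; have [e ? ?] := @main_lemma _ _ _ _ _ _ TK GK CT CG FF' (pin i); exists e.
exists (\sum_(i < n) w i *: e i).
  by exists n, w, e; split => // i; case: (He i).
move=> h.
have cD := covecDl; have c0 := covec0l.
rewrite !(morph_sum (fun z => covec z _) (fun u v => cD u v _) (c0 _)).
by apply: eq_bigr => i _; rewrite !covecZl; case: (He i) => _ ->.
Qed.

Lemma fiber (D : V -> V) (y : 'rV[R]_d) (z : V) :
  (forall h', exists h, D h = h') -> (forall h, (D h).1 = h.1) ->
  (forall h, covec (y, 0) h = covec z (D h)) -> z = (y, 0).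
Proof.
move=> Ds D1 H; apply: covec_inj => h'.
have [h <-] := Ds h'.
by rewrite -H /covec /= !dotv0l D1.
Qed.

Lemma entry_le m n (u : 'M[R]_(m, n)) i j : `|u i j| <= `|u|.
Proof.
have -> : `|u| = mx_norm u by []. rewrite mx_normrE.
exact: (le_bigmax _ (fun ij : prod (ordinal m) (ordinal n) => `|u ij.1 ij.2|) (i, j)).
Qed.

Lemma mx_norm_le m n (u : 'M[R]_(m, n)) M : 0 <= M ->
  (forall i j, `|u i j| <= M) -> `|u| <= M.
Proof.
move=> M0 H; have -> : `|u| = mx_norm u by []. rewrite mx_normrE.
by apply: bigmax_le => // -[i j] _; exact: H.
Qed.

Lemma pair_normE (w : V) : `|w| = Num.max `|w.1| `|w.2|.
Proof. by rewrite prod_normE. Qed.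

Lemma entry1_le (w : V) i : `|w.1 0 i| <= `|w|.
Proof. by rewrite pair_normE le_max entry_le. Qed.
Lemma entry2_le (w : V) i : `|w.2 0 i| <= `|w|.
Proof. by rewrite pair_normE le_max entry_le orbT. Qed.

Lemma pair_norm_le (w : V) M : 0 <= M ->
  (forall i, `|w.1 0 i| <= M) -> (forall j, `|w.2 0 j| <= M) -> `|w| <= M.
Proof.
move=> M0 H1 H2; rewrite pair_normE ge_max; apply/andP; split;
  apply: mx_norm_le => // i j; rewrite (ord1 i); [exact: H1|exact: H2].
Qed.

End Basis.
Arguments E1 {R d k} i.
Arguments E2 {R d k} j.

Section Lip.
Variables (R : realType) (d k : nat).
Local Notation V := ('rV[R]_d * 'rV[R]_k)%type.

Lemma covec_lin (c : V) : linear (covec c).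
Proof. by move=> a u v; rewrite covecDr covecZr. Qed.
HB.instance Definition _ (c : V) :=
  GRing.isLinear.Build R V R _ (covec c) (covec_lin c).
Definition covecL (c : V) : {linear V -> R} := covec c.

Lemma covec_cont (c : V) : continuous (covec c).
Proof.
move=> p.
have e1 (s0 : V) i : (fun s : V => s.1 0 i) @ s0 --> s0.1 0 i.
  apply: (@continuous_comp V 'rV[R]_d R fst (fun M : 'rV[R]_d => M 0 i) s0).
    exact: fst_cont.
  exact: (@coord_continuous R 1 d 0 i s0.1).
have e2 (s0 : V) i : (fun s : V => s.2 0 i) @ s0 --> s0.2 0 i.
  apply: (@continuous_comp V 'rV[R]_k R snd (fun M : 'rV[R]_k => M 0 i) s0).
    exact: snd_cont.
  exact: (@coord_continuous R 1 k 0 i s0.2).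
rewrite /covec /dotv; apply: cvgD.
  apply: cvg_big => //; first exact: add_continuous.
  by move=> i _; apply: cvgM; [exact: cvg_cst|exact: e1].
apply: cvg_big => //; first exact: add_continuous.
by move=> i _; apply: cvgM; [exact: cvg_cst|exact: e2].
Qed.

Lemma coord_mvt (T : V -> V) (c x y : V) (P : set V) (C : R) :
  (forall z, differentiable T z) ->
  (forall w, `|covec c w| <= `|w|) ->
  (forall t, 0 <= t <= 1 -> P (y + t *: (x - y))) ->
  (forall z, P z -> forall h, `|'d T z h| <= C * `|h|) ->
  `|covec c (T x) - covec c (T y)| <= C * `|x - y|.
Proof.
move=> dT hc hP hB.
set v := x - y.
pose l : R -> V := cst y + ( *:%R ^~ v).
have lE t : l t = y + t *: v by [].
have Hd t : is_diff t l (0 + ( *:%R ^~ v)).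
  exact: is_diffD.
have dl t : differentiable l t by have [] := Hd t.
have dlv t : 'd l t 1 = v.
  have [_ ->] := Hd t.
  by rewrite /= add0r scale1r.
pose f : V -> R := covec c \o T.
have df p : differentiable f p.
  apply: differentiable_comp => //.
  exact: (@linear_differentiable R V R (covecL c) (T p) (covec_cont c)).
have dfE p h : 'd f p h = covec c ('d T p h).
  have H := @diff_comp R V V R T (covecL c) p (dT p)
    (@linear_differentiable R V R (covecL c) (T p) (covec_cont c)).
  have H1 := congr1 (fun G => G h) H; simpl in H1.
  rewrite H1.
  have H2 := @diff_lin R V R (covecL c) (T p) (covec_cont c).
  exact: (congr1 (fun G => G ('d T p h)) H2).
pose g := f \o l.
have dg t : differentiable g t := differentiable_comp (dl t) (df (l t)).
have gd (t : R) : is_derive t (1 : R) g (covec c ('d T (l t) v)).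
  apply: DeriveDef; first exact: diff_derivable.
  rewrite deriveE //.
  have H := congr1 (fun G => G 1) (diff_comp (dl t) (df (l t))).
  simpl in H; rewrite H dlv; exact: dfE.
have gc : {within `[0, 1], continuous g}.
  apply: continuous_subspaceT => t; exact: differentiable_continuous.
have [t t01 Ht] := MVT_segment ler01 (fun t _ => gd t) gc.
have g1 : g 1 = covec c (T x) by rewrite /g /f /= lE scale1r /v addrC subrK.
have g0 : g 0 = covec c (T y) by rewrite /g /f /= lE scale0r addr0.
rewrite -g1 -g0 Ht subr0 mulr1.
apply: le_trans (hc _) _; apply: hB; apply: hP.
by move: t01; rewrite in_itv.
Qed.

Lemma aux_bnd (u v : V) : `|v - u| < 1 -> `|u| <= `|v| + 1.
Proof.
move=> Hb; have -> : u = v + (u - v) by rewrite addrC subrK.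
apply: (le_trans (ler_normD _ _)); rewrite lerD2l.
by rewrite distrC ltW.
Qed.

Lemma dbound (T : V -> V) (a : V) : C1 T -> exists C : R, 0 <= C /\
  \forall z \near a, forall h, `|'d T z h| <= C * `|h|.
Proof.
move=> [dT cT].
pose C := \sum_i (`|'d T a (E1 i)| + 1) + \sum_j (`|'d T a (E2 j)| + 1).
exists C; split.
  by apply: addr_ge0; apply: sumr_ge0 => i _; apply: addr_ge0.
have n1 : \forall z \near a, forall i, `|'d T a (E1 i) - 'd T z (E1 i)| < 1.
  apply: (@filter_forall V 'I_d (fun i z => `|'d T a (E1 i) - 'd T z (E1 i)| < 1) (nbhs a) _) => i.
  have := cT (E1 i) a.
  move=> /cvgrPdist_lt H; exact: (H 1 ltr01).
have n2 : \forall z \near a, forall j, `|'d T a (E2 j) - 'd T z (E2 j)| < 1.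
  apply: (@filter_forall V 'I_k (fun j z => `|'d T a (E2 j) - 'd T z (E2 j)| < 1) (nbhs a) _) => j.
  have := cT (E2 j) a.
  move=> /cvgrPdist_lt H; exact: (H 1 ltr01).
apply: filterS2 n1 n2 => z H1 H2 h.
have bnd (b : V) : `|'d T a b - 'd T z b| < 1 -> `|'d T z b| <= `|'d T a b| + 1.
  exact: (@aux_bnd ('d T z b) ('d T a b)).
have E : 'd T z h = \sum_i h.1 0 i *: 'd T z (E1 i) + \sum_j h.2 0 j *: 'd T z (E2 j).
  rewrite [in LHS](@decomp R d k h) linearD !linear_sum.
  by congr (_ + _); apply: eq_bigr => i _; rewrite linearZ.
rewrite E; apply: (le_trans (ler_normD _ _)).
rewrite /C mulrDl; apply: lerD.
  apply: (le_trans (ler_norm_sum _ _ _)); rewrite mulr_suml; apply: ler_sum => i _.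
  rewrite normrZ mulrC; apply: ler_pM => //.
    exact: (bnd (E1 i) (H1 i)).
  exact: (@entry1_le R d k h i).
apply: (le_trans (ler_norm_sum _ _ _)); rewrite mulr_suml; apply: ler_sum => i _.
rewrite normrZ mulrC; apply: ler_pM => //.
  exact: (bnd (E2 i) (H2 i)).
exact: (@entry2_le R d k h i).
Qed.


Lemma T_lip (T : V -> V) (a : V) : C1 T -> exists C : R, 0 <= C /\
  exists r : R, 0 < r /\ forall x y, ball a r x -> ball a r y ->
    `|T x - T y| <= C * `|x - y|.
Proof.
move=> CT; have [C [C0 HC]] := @dbound T a CT.
move/nbhs_ballP: HC => [r /= r0 Hr].
exists C; split => //; exists r; split => // x y bx byy.
have hP t : 0 <= t <= 1 -> ball a r (y + t *: (x - y)).
  exact: ball_convex.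
apply: pair_norm_le => [|i|j]; first by apply: mulr_ge0.
  have := @coord_mvt T (E1 i) x y (ball a r) C CT.1 _ hP (fun z hz => Hr z hz).
  rewrite !(@covecC R d k (E1 i)) !covecE1 /= !mxE; apply.
  by move=> w; rewrite covecC covecE1; exact: entry1_le.
have := @coord_mvt T (E2 j) x y (ball a r) C CT.1 _ hP (fun z hz => Hr z hz).
rewrite !(@covecC R d k (E2 j)) !covecE2 /= !mxE; apply.
by move=> w; rewrite covecC covecE2; exact: entry2_le.
Qed.

Lemma lip_comp (T : V -> V) (S : V -> R) :
  locally_lipschitz S -> C1 T -> locally_lipschitz (fun p => S (T p)).
Proof.
move=> Slip CT a.
have [r [r0 [K HK]]] := Slip (T a).
have [C [C0 [r1 [r10 HT]]]] := @T_lip T a CT.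
have hc : nbhs a (T @^-1` ball (T a) r).
  exact: (differentiable_continuous (CT.1 a)) _ (nbhsx_ballx _ _ r0).
move/nbhs_ballP: hc => [r2 /= r20 Hr2].
exists (Num.min r1 r2); split; first by rewrite lt_min r10 r20.
exists (Num.max K 0 * C) => x y bx byy.
have bx1 : ball a r1 x by apply: le_ball bx; rewrite ge_min lexx.
have by1 : ball a r1 y by apply: le_ball byy; rewrite ge_min lexx.
have bx2 : ball a r2 x by apply: le_ball bx; rewrite ge_min lexx orbT.
have by2 : ball a r2 y by apply: le_ball byy; rewrite ge_min lexx orbT.
apply: (le_trans (HK _ _ (Hr2 _ bx2) (Hr2 _ by2))).
apply: (@le_trans _ _ (Num.max K 0 * `|T x - T y|)).
  by apply: ler_wpM2r => //; rewrite le_max lexx.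
rewrite -mulrA; apply: ler_wpM2l; first by rewrite le_max lexx orbT.
exact: HT.
Qed.

End Lip.

Theorem lemma2p20 (R : realType) (d k : nat)
  (S : 'rV[R]_d * 'rV[R]_k -> R) (L : set ('rV[R]_d * 'rV[R]_d))
  (phi : 'rV[R]_d -> 'rV[R]_k -> 'rV[R]_k) :
  generating_family S L ->
  C1_diffeo (fun p : 'rV[R]_d * 'rV[R]_k => (p.1, phi p.1 p.2)) ->
  (forall x : 'rV[R]_d, C1_diffeo (phi x)) ->
  generating_family (fun p : 'rV[R]_d * 'rV[R]_k => S (p.1, phi p.1 p.2)) L.
Proof.
set T := (fun p : 'rV[R]_d * 'rV[R]_k => (p.1, phi p.1 p.2)).
move=> [Slip HL] [Gi [TK GK CT CG]] _.
have T1 p : (T p).1 = p.1 by [].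
have G1 p : (Gi p).1 = p.1 by rewrite -{2}(GK p).
split.
  exact: (@lip_comp R d k T S Slip CT).
rewrite HL; apply/seteqP; split => -[x y] /= [eta H].
- pose b := (x, eta).
  have [z Hz Hc] := @conv_transfer R d k Gi T (fun p => S (T p)) S b (y, 0)
    GK TK CG CT (fun p => congr1 S (esym (GK p))) H.
  have zE : z = (y, 0).
    apply: (@fiber R d k _ y z _ _ Hc).
      move=> h'; exists ('d T (Gi b) h').
      have := @dchain R d k T Gi (Gi b) h' TK (CT.1 _).
      by rewrite GK => /(_ (CG.1 _)).
    by move=> h; apply: dfst => //; exact: CG.1.
  exists (Gi b).2.
  have -> : (x, (Gi b).2) = Gi b by rewrite [in RHS](surjective_pairing (Gi b)) G1.
  by rewrite -zE.
- have [z Hz Hc] := @conv_transfer R d k T Gi S (fun p => S (T p)) (x, eta) (y, 0)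
    TK GK CT CG (fun p => erefl) H.
  have zE : z = (y, 0).
    apply: (@fiber R d k _ y z _ _ Hc).
      move=> h'; exists ('d Gi (T (x, eta)) h').
      have := @dchain R d k Gi T (T (x, eta)) h' GK (CG.1 _).
      by rewrite TK => /(_ (CT.1 _)).
    by move=> h; apply: dfst => //; exact: CT.1.
  by exists (phi x eta); rewrite -zE.
Qed.
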